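(* Let $p\colon E\to B$ be an arc-hedgehog covering where $E$ and $B$ are Peano spaces. If $B$ is metrizable, then $E$ is metrizable.
   Context: All maps are continuous. A Peano space is a connected, locally path-connected space. For a class $\mathcal{P}$ of spaces, $p\colon E\to B$ is a $\mathcal{P}$-covering if for every $e_0\in E$, $X\in\mathcal{P}$, $x_0\in X$ and map $f\colon X\to B$ with $f(x_0)=p(e_0)$ there is a unique map $g\colon X\to E$ with $p\circ g=f$, $g(x_0)=e_0$. A directed wedge is $(Z,z_0)=\bigvee_{s\in S}(Z_s,z_s)$, a wedge of pointed Peano spaces indexed by a directed set $S$, topologized so that $U\subset Z\setminus\{z_0\}$ is open iff each $U\cap Z_s$ is open, and $U\ni z_0$ is an open neighborhood of $z_0$ iff each $U\cap Z_s$ is open and there is $t\in S$ with $Z_s\subset U$ for all $s>t$. An arc-hedgehog is a directed wedge with each $(Z_s,z_s)\cong([0,1],0)$; an arc-hedgehog covering is a $\mathcal{P}$-covering for $\mathcal{P}$ the class of all arc-hedgehogs. *)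

(* Defs.v *)
From HB Require Import structures.
From mathcomp Require Import all_boot all_order all_algebra.
From mathcomp Require Import all_classical all_reals topology normedtype.
From mathcomp Require Import Rstruct Rstruct_topology.
From Stdlib Require Import Rdefinitions.

Set Implicit Arguments.
Unset Strict Implicit.
Unset Printing Implicit Defensive.
Import Order.TTheory GRing.Theory Num.Theory.
Local Open Scope classical_set_scope.
Local Open Scope ring_scope.

Definition path_connected {T : topologicalType} (A : set T) : Prop :=
  forall x y, A x -> A y ->
    exists f : R -> T, {within `[0, 1], continuous f} /\
      f 0 = x /\ f 1 = y /\ f @` `[0, 1] `<=` A.

Definition locally_path_connected (T : topologicalType) : Prop :=
  forall (x : T) (U : set T), nbhs x U ->
    exists V : set T, open V /\ V x /\ V `<=` U /\ path_connected V.

Definition Peano (T : topologicalType) : Prop :=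
  connected [set: T] /\ locally_path_connected T.

Definition metrizable (T : topologicalType) : Prop :=
  exists d : T -> T -> R,
    (forall x y, d x y = 0 <-> x = y) /\
    (forall x y, d x y = d y x) /\
    (forall x y z, d x z <= d x y + d y z) /\
    (forall A : set T, open A <->
       forall x, A x -> exists e : R, 0 < e /\ [set y | d x y < e] `<=` A).

Definition directed_set (S : Type) (le : S -> S -> Prop) : Prop :=
  (exists s : S, True) /\
  (forall s, le s s) /\
  (forall a b c, le a b -> le b c -> le a c) /\
  (forall a b, exists c, le a c /\ le b c).

Definition strictly_above (S : Type) (le : S -> S -> Prop) (t s : S) : Prop :=
  le t s /\ ~ le s t.

(** ** Arc-hedgehogs
   The arc-hedgehog indexed by the directed set (S, le) is the wedge of
   copies Z_s of ([0,1],0), s in S.  Points: [None] is the wedge point z0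
   (= 0 in every Z_s); [Some (s, t)] is the point t in (0,1] of Z_s. *)

Definition hpt (S : Type) := option (S * {t : R | 0 < t <= 1}).

(* U ∩ Z_s, viewed as a subset of [0,1] *)
Definition hslice (S : Type) (U : set (hpt S)) (s : S) : set R :=
  fun t => (t = 0 /\ U None) \/
           (exists h : 0 < t <= 1, U (Some (s, exist _ t h))).

Definition open01 (A : set R) : Prop :=
  forall x, A x -> exists e : R, 0 < e /\
    forall y, 0 <= y <= 1 -> `|y - x| < e -> A y.

Definition hopen (S : Type) (le : S -> S -> Prop) (U : set (hpt S)) : Prop :=
  (forall s, open01 (hslice U s)) /\
  (U None -> exists t : S, forall s, strictly_above le t s ->
                forall u, U (Some (s, u))).

Definition hcont (S : Type) (le : S -> S -> Prop) (T : topologicalType)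
    (f : hpt S -> T) : Prop :=
  forall V : set T, open V -> hopen le (f @^-1` V).

Definition arc_hedgehog_covering (E B : topologicalType) (p : E -> B) : Prop :=
  continuous p /\
  forall (e0 : E) (S : Type) (le : S -> S -> Prop), directed_set le ->
  forall (x0 : hpt S) (f : hpt S -> B), hcont le f -> f x0 = p e0 ->
    exists! g : hpt S -> E, hcont le g /\ p \o g = f /\ g x0 = e0.

(* Main.v *)
Require Import Defs.
From Stdlib Require Import Rdefinitions.
From HB Require Import structures.
From mathcomp Require Import all_boot all_order all_algebra.
From mathcomp Require Import all_classical all_reals topology normedtype.
From mathcomp Require Import Rstruct Rstruct_topology.
From mathcomp Require Import ring lra.
Import Order.TTheory GRing.Theory Num.Theory.
Local Open Scope classical_set_scope.
Local Open Scope ring_scope.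

Definition pc {T : topologicalType} (g : R -> T) : Prop :=
  forall t : R, 0 <= t <= 1 -> forall W, nbhs (g t) W ->
    exists e : R, 0 < e /\ forall s : R, 0 <= s <= 1 -> `|s - t| < e -> W (g s).

Lemma within_pc {T : topologicalType} (g : R -> T) :
  {within `[0, 1], continuous g} -> pc g.
Proof.
move=> H0; have := H0; rewrite continuous_subspace_in => H t t01 W Wn.
have t01' : `[0, 1]%classic t by rewrite /= in_itv /=.
have := H t; rewrite inE => /(_ t01') /(_ _ Wn).
move=> Hn; have Hn' : within `[0,1] (nbhs t) (g @^-1` W).
  by rewrite (nbhs_subspace_in t01'); exact: Hn.
move: Hn' => /nbhs_ballP [e e0 He].
exists e; split => // s s01 st.
apply: (He s) => /=; last by rewrite in_itv /=.
by rewrite /ball /= distrC.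
Qed.

Lemma pc_comp {T U : topologicalType} (g : R -> T) (h : T -> U) :
  continuous h -> pc g -> pc (h \o g).
Proof.
move=> hc pg t t01 W Wn.
have Wn' : nbhs (g t) (h @^-1` W) by exact: hc (g t) W Wn.
have [e [e0 He]] := pg t t01 _ Wn'.
by exists e; split.
Qed.

Lemma pc_cst {T : topologicalType} (x : T) : pc (fun _ : R => x).
Proof.
move=> t t01 W Wn; exists 1; split; first exact: ltr01.
by move=> s _ _; exact: nbhs_singleton Wn.
Qed.

Lemma pc_concat {T : topologicalType} (a b : R -> T) :
  pc a -> pc b -> a 1 = b 0 ->
  pc (fun t => if (t <= 2^-1)%R then a (2 * t)%R else b (2 * t - 1)%R).
Proof.
move=> pa pb ab t /andP[t0 t1] W Wn.
have E1 : exists e1 : R, 0 < e1 /\ forall s : R, 0 <= s -> s <= 2^-1 ->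
    `|s - t| < e1 -> W (a (2 * s)).
  case: (leP t (2^-1)) => ht.
    rewrite ht in Wn.
    have t2 : 0 <= 2 * t <= 1 by apply/andP; split; lra.
    have [e [e0 He]] := pa _ t2 W Wn.
    exists (e / 2); split; first lra.
    move=> s s0 s2 st; apply: He; first by apply/andP; split; lra.
    rewrite -mulrBr normrM ger0_norm; lra.
  exists (t - 2^-1); split; first lra.
  move=> s s0 s2 st; exfalso.
  have : `|s - t| = t - s by rewrite distrC ger0_norm; lra.
  lra.
have E2 : exists e2 : R, 0 < e2 /\ forall s : R, 2^-1 < s -> s <= 1 ->
    `|s - t| < e2 -> W (b (2 * s - 1)).
  case: (ltP t (2^-1)) => ht.
    exists (2^-1 - t); split; first lra.
    move=> s s0 s2 st; exfalso.
    have : `|s - t| = s - t by rewrite ger0_norm; lra.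
    lra.
  have Wn' : nbhs (b (2 * t - 1)) W.
    case: (leP t (2^-1)) Wn => ht' Wn //.
    have -> : 2 * t - 1 = 0 by lra.
    by rewrite -ab; have <- : 2 * t = 1 by lra.
  have t2 : 0 <= 2 * t - 1 <= 1 by apply/andP; split; lra.
  have [e [e0 He]] := pb _ t2 W Wn'.
  exists (e / 2); split; first lra.
  move=> s s0 s2 st; apply: He; first by apply/andP; split; lra.
  have -> : 2 * s - 1 - (2 * t - 1) = 2 * (s - t) by ring.
  rewrite normrM ger0_norm; lra.
have [e1 [e10 H1]] := E1.
have [e2 [e20 H2]] := E2.
exists (Order.min e1 e2); split; first by rewrite lt_min e10 e20.
move=> s /andP[s0 s1]; rewrite lt_min => /andP[se1 se2].
case: (leP s (2^-1)) => hs; first exact: H1.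
exact: H2.
Qed.

Lemma one01P : (0 < 1 :> R) && (1 <= 1 :> R).
Proof. by rewrite ltr01 lexx. Qed.

Lemma zo1 : (0 <= 1 :> R) && (1 <= 1 :> R).
Proof. by rewrite ler01 lexx. Qed.

Definition one01 : {t : R | 0 < t <= 1} := exist _ 1 one01P.

Lemma open01_path {T : topologicalType} (g : R -> T) (c : T) (V : set T) :
  pc g -> g 0 = c -> open V ->
  open01 (fun t => (t = 0 /\ V c) \/ exists h : 0 < t <= 1, V (g t)).
Proof.
move=> pg g0 oV x Hx.
have [x01 Vx] : 0 <= x <= 1 /\ V (g x).
  case: Hx => [[-> Vc]|[h Vg]].
    by split; [rewrite lexx ler01 | rewrite g0].
  by split => //; case/andP: h => /ltW -> ->.
have Wn : nbhs (g x) V by apply: open_nbhs_nbhs; split.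
have [e [e0 He]] := pg x x01 V Wn.
exists e; split => // y y01 yx.
have Vy := He y y01 yx.
have [y0|yn0] := eqVneq y 0.
  by left; split => //; rewrite -g0 -y0.
right; case/andP: y01 => y0' y1.
have h : 0 < y <= 1 by rewrite lt_def yn0 y0' y1.
by exists h.
Qed.

Lemma hcont_comp (S : Type) (le : S -> S -> Prop) {T U : topologicalType}
  (g : hpt S -> T) (h : T -> U) :
  continuous h -> hcont le g -> hcont le (h \o g).
Proof.
move=> hc hg V oV; apply: (hg (h @^-1` V)).
by apply: open_comp => // x _; exact: hc.
Qed.

Definition leU : unit -> unit -> Prop := fun _ _ => True.

Lemma dirU : directed_set leU.
Proof. by split; [exists tt | split; [|split]] => // a b; exists tt. Qed.

Lemma hopen_unit (U : set (hpt unit)) : open01 (hslice U tt) -> hopen leU U.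
Proof.
move=> H; split; first by case.
by move=> _; exists tt => s [_ H']; exfalso; exact: H'.
Qed.

Definition hpath {E : Type} (x : E) (g : R -> E) : hpt unit -> E :=
  fun z => match z with None => x | Some (_, u) => g (sval u) end.

Lemma hcont_hpath {E : topologicalType} (x : E) (g : R -> E) :
  pc g -> g 0 = x -> hcont leU (hpath x g).
Proof.
move=> pg g0 V oV; apply: hopen_unit.
exact (@open01_path _ g x V pg g0 oV).
Qed.

Definition jn (n : nat) : hpt unit -> hpt nat :=
  fun z => match z with None => None | Some (_, u) => Some (n, u) end.

Definition leN : nat -> nat -> Prop := fun m n => leq m n.

Lemma dirN : directed_set leN.
Proof.
split; first by exists 0%N.
split; first by move=> s; exact: leqnn.
split; first by move=> a b c; exact: leq_trans.
by move=> a b; exists (maxn a b); split; [exact: leq_maxl | exact: leq_maxr].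
Qed.

Lemma key (E B : topologicalType) (p : E -> B) (dB : B -> B -> R)
  (hB : forall A : set B, open A -> forall x, A x ->
          exists e : R, 0 < e /\ [set y | dB x y < e] `<=` A)
  (cov : arc_hedgehog_covering p) (x : E) (γ : nat -> R -> E) :
  (forall n, pc (γ n)) -> (forall n, γ n 0 = x) ->
  (forall e : R, 0 < e -> exists N : nat, forall n : nat, leq N.+1 n ->
      forall t : R, 0 <= t <= 1 -> dB (p x) (p (γ n t)) < e) ->
  forall A, open A -> A x -> exists n, A (γ n 1).
Proof.
move=> pcg g0 gb A oA Ax; case: cov => pcont cov.
pose f : hpt nat -> B := fun z => match z with
  None => p x | Some (n, u) => p (γ n (sval u)) end.
have fc : hcont leN f.
  move=> V oV; split.
    move=> n.
    have pcn : pc (p \o γ n) by apply: pc_comp.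
    have pg0 : (p \o γ n) 0 = p x by rewrite /= g0.
    exact (@open01_path _ (p \o γ n) (p x) V pcn pg0 oV).
  move=> Vpx; have [e [e0 He]] := hB V oV (p x) Vpx.
  have [N HN] := gb e e0.
  exists N => s [Ns nsN] u; apply: He => /=; apply: HN.
    by rewrite ltnNge; apply/negP.
  by case: u => t /= /andP[/ltW -> ->].
have [g [[gc [pg gx]] _]] := cov x nat leN dirN None f fc erefl.
have restr : forall n, g (Some (n, one01)) = γ n 1.
  move=> n.
  have hc1 := @hcont_hpath _ x (γ n) (pcg n) (g0 n).
  have hc2 := @hcont_comp _ _ _ _ _ p pcont hc1.
  have [g' [_ ug']] := cov x unit leU dirU None (p \o hpath x (γ n)) hc2 erefl.
  have e1 := ug' (hpath x (γ n)) (conj hc1 (conj erefl erefl)).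
  have hc3 : hcont leU (g \o jn n).
    move=> V oV; apply: hopen_unit; exact ((gc V oV).1 n).
  have pe : p \o (g \o jn n) = p \o hpath x (γ n).
    apply: funext => -[[[] u]|] /=.
      by have := congr1 (fun F => F (Some (n, u))) pg.
    by rewrite gx.
  have e2 := ug' (g \o jn n) (conj hc3 (conj pe gx)).
  have := congr1 (fun F => F (Some (tt, one01))) (etrans (esym e1) e2).
  by move=> /= ->.
have := (gc A oA).2; rewrite /= gx => /(_ Ax) [t0 Ht0].
exists t0.+1; rewrite -restr; apply: Ht0; split; first exact: leqnSn.
by rewrite /leN ltnn.
Qed.

Definition hpt2 {E : Type} (x y : E) : hpt unit -> E :=
  fun z => match z with None => x | Some _ => y end.

Lemma hcont_hpt2 {E : topologicalType} (x y : E) :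
  (forall V, open V -> V x -> V y) -> (forall V, open V -> V y -> V x) ->
  hcont leU (hpt2 x y).
Proof.
move=> H1 H2 V oV; apply: hopen_unit => t Ht.
have [Vx Vy] : V x /\ V y.
  by case: Ht => [[_ Vx]|[hh Vy]]; split => //; [exact: H1 | exact: H2].
exists 1; split; first exact: ltr01.
move=> s /andP[s0 s1] _.
have [->|sn0] := eqVneq s 0; first by left.
right; have h : 0 < s <= 1 by rewrite lt_def sn0 s0 s1.
by exists h.
Qed.

Lemma key_eq (E B : topologicalType) (p : E -> B)
  (cov : arc_hedgehog_covering p) (x y : E) :
  p x = p y -> (forall V, open V -> V x -> V y) ->
  (forall V, open V -> V y -> V x) -> x = y.
Proof.
move=> pxy H1 H2; case: cov => pcont cov.
have hxx := @hcont_hpt2 _ x x (fun V _ (h : V x) => h) (fun V _ (h : V x) => h).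
have hxy := @hcont_hpt2 _ x y H1 H2.
have [g' [_ ug']] := cov x unit leU dirU None (p \o hpt2 x x)
  (@hcont_comp _ _ _ _ _ p pcont hxx) erefl.
have e1 := ug' (hpt2 x x) (conj hxx (conj erefl erefl)).
have pe : p \o hpt2 x y = p \o hpt2 x x by apply: funext => -[?|] //=.
have e2 := ug' (hpt2 x y) (conj hxy (conj pe erefl)).
by have := congr1 (fun F => F (Some (tt, one01))) (etrans (esym e1) e2).
Qed.

Definition Pp {E B : topologicalType} (p : E -> B) (dB : B -> B -> R)
  (x y : E) (r : R) : Prop :=
  exists γ : R -> E, pc γ /\ γ 0 = x /\ γ 1 = y /\
    forall t : R, 0 <= t <= 1 -> dB (p x) (p (γ t)) < r.

Definition Sr {E B : topologicalType} (p : E -> B) (dB : B -> B -> R)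
  (x y : E) : set R := [set r | r = 1 \/ (0 < r /\ Pp p dB x y r)].

Definition rho {E B : topologicalType} (p : E -> B) (dB : B -> B -> R)
  (x y : E) : R := inf (Sr p dB x y).

Section Rho.
Context {E B : topologicalType} (p : E -> B) (dB : B -> B -> R).

Lemma Sr_inf x y : has_inf (Sr p dB x y).
Proof.
split; first by exists 1; left.
by exists 0 => r [->|[r0 _]]; [exact: ler01 | exact: ltW].
Qed.

Lemma rho_ge0 x y : 0 <= rho p dB x y.
Proof.
apply: lb_le_inf; first by exists 1; left.
by move=> r [->|[r0 _]]; [exact: ler01 | exact: ltW].
Qed.

Lemma rho_le x y r : Sr p dB x y r -> rho p dB x y <= r.
Proof. by move=> Sxr; exact: (ge_inf (Sr_inf x y).2). Qed.

Lemma rho_small x y e : rho p dB x y < e -> e <= 1 ->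
  exists r, r < e /\ Pp p dB x y r.
Proof.
move=> re e1.
have eps0 : 0 < e - rho p dB x y by lra.
have [r Sxr rl] := inf_adherent eps0 (Sr_inf x y).
have rlt : r < e by rewrite /rho in rl; lra.
case: Sxr => [r1|[_ Pr]]; first by lra.
by exists r.
Qed.

Lemma rho_xx x : (forall r, 0 < r -> Pp p dB x x r) -> rho p dB x x = 0.
Proof.
move=> H; have h0 := rho_ge0 x x.
case: (ltP 0 (rho p dB x x)) => h; last by lra.
have : rho p dB x x <= rho p dB x x / 2.
  by apply: rho_le; right; split; [lra | apply: H; lra].
lra.
Qed.

Lemma Pp_concat
  (dtri : forall x y z, dB x z <= dB x y + dB y z)
  (dge0 : forall a b, 0 <= dB a b) x y z r1 r2 :
  Pp p dB x y r1 -> Pp p dB y z r2 -> Pp p dB x z (r1 + r2)%R.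
Proof.
move=> [a [pa [a0 [a1 ab]]]] [b [pb [b0 [b1 bb]]]].
have a1b0 : a 1 = b 0 by rewrite a1 b0.
exists (fun t => if (t <= 2^-1)%R then a (2 * t)%R else b (2 * t - 1)%R).
split; first exact: pc_concat.
have h0 : 0 <= 2^-1 :> R by lra.
have h1 : (1 <= 2^-1 :> R) = false by apply/negbTE; rewrite -ltNge; lra.
split; first by rewrite h0 mulr0.
split; first by rewrite h1 mulr1 (_ : 2 - 1 = 1) //; lra.
move=> t /andP[t0 t1].
have dxy : dB (p x) (p y) < r1 by rewrite -a1; apply: ab; rewrite ler01 lexx.
case: ifP => ht.
  have := ab (2 * t) (ltac:(apply/andP; split; lra)).
  have := bb 0 (ltac:(rewrite lexx ler01 //)).
  have := dge0 (p y) (p (b 0)).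
  lra.
have ht' : 2^-1 < t by rewrite ltNge ht.
have := bb (2 * t - 1) (ltac:(apply/andP; split; lra)).
have := dtri (p x) (p y) (p (b (2 * t - 1))).
lra.
Qed.
End Rho.

Lemma rho_tri {E B : topologicalType} (p : E -> B) (dB : B -> B -> R)
  (dtri : forall x y z, dB x z <= dB x y + dB y z)
  (dge0 : forall a b, 0 <= dB a b) x y z :
  rho p dB x z <= rho p dB x y + rho p dB y z.
Proof.
apply/ler_addgt0Pr => eps eps0.
have eps2 : 0 < eps / 2 by lra.
have [r1 S1 r1l] := inf_adherent eps2 (Sr_inf p dB x y).
have [r2 S2 r2l] := inf_adherent eps2 (Sr_inf p dB y z).
rewrite /rho in r1l r2l *.
have r1ge : 0 <= r1 by case: S1 => [->|[/ltW]] //; exact: ler01.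
have r2ge : 0 <= r2 by case: S2 => [->|[/ltW]] //; exact: ler01.
suff : inf (Sr p dB x z) <= r1 + r2 by lra.
case: S1 => [r11|[r10 P1]].
  have := @rho_le E B p dB x z r1 (or_introl r11).
  rewrite /rho; lra.
case: S2 => [r21|[r20 P2]].
  have := @rho_le E B p dB x z r2 (or_introl r21).
  rewrite /rho; lra.
apply: rho_le; right; split; first lra.
exact: (@Pp_concat E B p dB dtri dge0 x y z r1 r2 P1 P2).
Qed.

Theorem proposition3p10 (E B : topologicalType) (p : E -> B) :
  Peano E -> Peano B -> arc_hedgehog_covering p ->
  metrizable B -> metrizable E.
Proof.
move=> [_ lpc] _ cov [dB [d0 [dsym [dtri dopen]]]].
have pcont : continuous p by case: cov.
have hB : forall A : set B, open A -> forall x, A x ->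
    exists e : R, 0 < e /\ [set y | dB x y < e] `<=` A.
  by move=> A oA; apply/dopen.
have dB0 : forall a, dB a a = 0 by move=> a; apply/d0.
have dge0 : forall a b, 0 <= dB a b.
  by move=> a b; have := dtri a b a; rewrite dB0 (dsym b a); lra.
have bopen : forall b r, open [set y | dB b y < r].
  move=> b r; apply/dopen => z /= hz; exists (r - dB b z); split; first lra.
  by move=> w /= hw; have := dtri b z w; lra.
pose rh := rho p dB.
have C : forall x A, open A -> A x ->
    exists e : R, 0 < e /\ forall y, rh x y < e -> A y.
  move=> x A oA Ax.
  case: (pselect (exists e : R, 0 < e /\ forall y, rh x y < e -> A y)) => // nC.
  exfalso.
  have Hn : forall n : nat, exists γ : R -> E, pc γ /\ γ 0 = x /\ ~ A (γ 1) /\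
      forall t, 0 <= t <= 1 -> dB (p x) (p (γ t)) < n.+1%:R^-1.
    move=> n.
    have en : 0 < n.+1%:R^-1 :> R by rewrite invr_gt0 ltr0n.
    have en1 : n.+1%:R^-1 <= 1 :> R by rewrite invf_le1 ?ltr0n // ler1n.
    have : ~ forall y, rh x y < n.+1%:R^-1 -> A y.
      by move=> H; apply: nC; exists n.+1%:R^-1.
    move=> /existsNP [y] /not_implyP [ry nAy].
    have [r [rlt [γ [pγ [γ0 [γ1 γb]]]]]] := @rho_small E B p dB x y _ ry en1.
    exists γ; split => //; split => //; split; first by rewrite γ1.
    by move=> t t01; apply: lt_trans rlt; exact: γb.
  have [γ Hγ] := choice Hn.
  have := @key E B p dB hB cov x γ (fun n => (Hγ n).1) (fun n => (Hγ n).2.1) _ A oA Ax.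
  case=> [e e0|n An]; last by have := (Hγ n).2.2.1.
  pose N := Num.Def.archi_bound e^-1.
  exists N => n Nn t t01.
  apply: lt_le_trans ((Hγ n).2.2.2 t t01) _.
  have eN : e^-1 < N%:R by apply: archi_boundP; rewrite invr_ge0 ltW.
  have Nn' : N%:R <= n.+1%:R :> R by rewrite ler_nat; exact: leq_trans (ltnW Nn) (leqnSn n).
  rewrite -(invrK e) lef_pV2 ?posrE ?invr_gt0 ?ltr0n //.
  by apply: ltW; apply: lt_le_trans eN Nn'.
exists (fun x y => rh x y + rh y x).
split; last split; last split.
- move=> x y; split.
  + move=> hd.
    have hxy : rh x y = 0 by have := rho_ge0 p dB x y; have := rho_ge0 p dB y x; lra.
    have hyx : rh y x = 0 by have := rho_ge0 p dB x y; have := rho_ge0 p dB y x; lra.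
    apply: (@key_eq E B p cov x y).
    * apply/d0; apply/eqP; rewrite eq_le dge0 andbT.
      case: (ltP (dB (p x) (p y)) 1) => D1.
        rewrite leNgt; apply/negP => D0.
        have hl : rho p dB x y < dB (p x) (p y) by rewrite /rh in hxy; rewrite hxy.
        have [r [rD [γ [_ [_ [γ1 γb]]]]]] := @rho_small E B p dB x y _ hl (ltW D1).
        have := γb 1 zo1; rewrite γ1; lra.
      have h2 : 2^-1 <= 1 :> R by lra.
      have hl : rho p dB x y < 2^-1 by rewrite /rh in hxy; rewrite hxy; lra.
      have [r [rD [γ [_ [_ [γ1 γb]]]]]] := @rho_small E B p dB x y _ hl h2.
      have := γb 1 zo1; rewrite γ1; lra.
    * move=> V oV Vx; have [e [e0 He]] := C x V oV Vx; apply: He; lra.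
    * move=> V oV Vy; have [e [e0 He]] := C y V oV Vy; apply: He; lra.
  + move=> <-.
    have -> : rh x x = 0.
      apply: rho_xx => r r0; exists (fun _ => x); split; first exact: pc_cst.
      by split => //; split => // t _; rewrite dB0.
    by rewrite addr0.
- by move=> x y; rewrite addrC.
- move=> x y z.
  have := @rho_tri E B p dB dtri dge0 x y z; have := @rho_tri E B p dB dtri dge0 z y x.
  rewrite /rh; lra.
move=> A; split.
  move=> oA x Ax; have [e [e0 He]] := C x A oA Ax.
  exists e; split => // y /= hd; apply: He.
  have := rho_ge0 p dB y x; rewrite /rh in hd; lra.
move=> Hb; rewrite openE => x Ax.
have [e [e0 He]] := Hb x Ax.
pose U := p @^-1` [set b | dB (p x) b < e / 4].
have oU : open U by apply: open_comp => // z _; exact: pcont.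
have Ux : U x by rewrite /U /= dB0; lra.
have [V [oV [Vx [VU pV]]]] := lpc x U (open_nbhs_nbhs (conj oU Ux)).
rewrite /interior; apply: (@filterS _ _ _ V); last first.
  by apply: open_nbhs_nbhs; split.
move=> z Vz; apply: He => /=.
have Uz := VU z Vz; rewrite /U /= in Uz.
have r1 : rh x z <= e / 4.
  apply: rho_le; right; split; first lra.
  have [f [fc [f0 [f1 fV]]]] := pV x z Vx Vz.
  exists f; split; first exact: within_pc.
  split => //; split => // t t01.
  have : V (f t) by apply: fV; exists t => //=; rewrite in_itv /=.
  by move/VU.
have r2 : rh z x <= e / 2.
  apply: rho_le; right; split; first lra.
  have [f [fc [f0 [f1 fV]]]] := pV z x Vz Vx.
  exists f; split; first exact: within_pc.
  split => //; split => // t t01.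
  have : V (f t) by apply: fV; exists t => //=; rewrite in_itv /=.
  move/VU; rewrite /U /= => h.
  have := dtri (p z) (p x) (p (f t)); rewrite (dsym (p z) (p x)); lra.
lra.
Qed.
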